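(* There exist constants $\delta>0$, $c>0$, $C>0$ and $N_0$ such that for every prime $N\ge N_0$: (i) there exists an integer $b\in[1,W)$ with $\gcd(b,W)=1$ such that $\frac1N\sum_{n=0}^{N-1}f_b(n)\ge\delta$; (ii) for every integer $b\in[1,W)$ with $\gcd(b,W)=1$ and every $n\in\{0,\dots,N-1\}$, one has $0\le f_b(n)\le c\,\nu_b(n)$ and $f_b(n)\le C\log N$.
   Context: Fix a $C^\infty$ function $\chi:\mathbb{R}\to[0,\infty)$ supported in $[-1,1]$ with $\chi(0)>0$ and $\int_0^\infty\chi'(x)^2\,dx=1$. Fix $\alpha\in(0,1/2)$. For a prime $N$ (large), let $w=w(N)=\lfloor\log\log N\rfloor$, $W=\prod_{p\le w,\ p\text{ prime}}p$, $R=N^\alpha$. $\mu$ is the Möbius function ($\mu(1)=1$, $\mu(d)=(-1)^\ell$ if $d$ is a product of $\ell$ distinct primes, $0$ otherwise) and $\phi$ is Euler's totient function. Set $\lambda(n)=\sum_{d\mid n,\ d\ge1}\mu(d)\chi\bigl(\frac{\log d}{\log R}\bigr)$ for integers $n\ge1$. For an integer $b$, define on $\{0,\dots,N-1\}$: $f_b(n)=\frac{\phi(W)}{W}\log(Wn+b)$ if $Wn+b\ge R$ and $Wn+b$ is prime, and $f_b(n)=0$ otherwise; and $\nu_b(n)=\frac{\phi(W)}{W}\log R\cdot\lambda(Wn+b)^2$. *)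

(* Defs.v *)
From Stdlib Require Import Reals.
From Coquelicot Require Import Coquelicot.
From mathcomp Require Import ssreflect ssrfun ssrbool eqtype ssrnat seq div prime bigop.

Open Scope R_scope.

Definition squarefreeb (d : nat) : bool :=
  all (fun p => logn p d == 1%N) (primes d).

Definition moebius (d : nat) : R :=
  if squarefreeb d then (-1) ^ (size (primes d)) else 0.

Definition w_of (N : nat) : nat := Z.to_nat (Int_part (ln (ln (INR N)))).

Definition W_of (N : nat) : nat := \prod_(0 <= p < (w_of N).+1 | prime p) p.

Definition R_of (alpha : R) (N : nat) : R := Rpower (INR N) alpha.

Definition phiW_over_W (N : nat) : R := INR (totient (W_of N)) / INR (W_of N).

Definition lambda_ (chi : R -> R) (alpha : R) (N : nat) (n : nat) : R :=
  \big[Rplus/0]_(d <- divisors n)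
     (moebius d * chi (ln (INR d) / ln (R_of alpha N))).

Definition f_b (alpha : R) (N b n : nat) : R :=
  let m := (W_of N * n + b)%N in
  if Rle_dec (R_of alpha N) (INR m) then
    (if prime m then phiW_over_W N * ln (INR m) else 0)
  else 0.

Definition nu_b (chi : R -> R) (alpha : R) (N b n : nat) : R :=
  phiW_over_W N * ln (R_of alpha N) * (lambda_ chi alpha N (W_of N * n + b)%N) ^ 2.

(* Main.v *)
Require Import Defs.
From HB Require Import structures.
From Stdlib Require Import Reals Lra Lia ZArith.
From Coquelicot Require Import Coquelicot.
From mathcomp Require Import ssreflect ssrfun ssrbool eqtype ssrnat seq div prime bigop binomial.
From mathcomp Require Import zify.
Open Scope R_scope.
Lemma RplusA : associative Rplus. Proof. move=> *; by rewrite Rplus_assoc. Qed.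
HB.instance Definition _ := Monoid.isComLaw.Build R 0 Rplus RplusA Rplus_comm Rplus_0_l.

Section NatPart.
Local Open Scope nat_scope.
Lemma count_le K m : \sum_(1 <= k < m) (k <= K) <= K.
Proof.
have H: forall j, \sum_(1 <= k < j.+1) (k <= K) <= minn j K.
  elim=> [|j IH]; first by rewrite big_geq.
  rewrite big_nat_recr //=.
  move: IH; set S := \sum_(_ <= _ < _) _.
  case: (leqP j.+1 K) => h /=; lia.
case: m => [|m]; first by rewrite big_geq.
apply: leq_trans (H m) _; exact: geq_minr.
Qed.

Lemma div2_le n d : 0 < d -> n.*2 %/ d <= (n %/ d).*2 + 1.
Proof.
move=> d0; rewrite addn1 -ltnS ltn_divLR //.
have h := ltn_ceil n d0.
move: h; set q := n %/ d; nia.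
Qed.

Lemma leg_bound p n : prime p -> 0 < n -> p ^ logn p 'C(n.*2, n) <= n.*2.
Proof.
move=> pp n0.
have p1 := prime_gt1 pp.
have n2: 0 < n.*2 by rewrite double_gt0.
set K := trunc_log p n.*2.
have hK : p ^ K <= n.*2 by exact: trunc_logP.
have hK2 : n.*2 < p ^ K.+1 by exact: trunc_log_ltn.
suff: logn p 'C(n.*2, n) <= K.
  by move=> h; apply: leq_trans hK; rewrite leq_exp2l.
have hb: 'C(n.*2, n) * (n`! * n`!) = (n.*2)`!.
  have := bin_fact (leq_addr n n); rewrite addnK addnn; done.
have Cgt0 : 0 < 'C(n.*2, n) by rewrite bin_gt0 -addnn leq_addr.
have e := congr1 (logn p) hb.
rewrite lognM ?muln_gt0 ?fact_gt0 // lognM ?fact_gt0 // !logn_fact // in e.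
set v := logn p _ in e *.
set a := \sum_(1 <= k < n.+1) n %/ p ^ k in e.
set b := \sum_(1 <= k < n.*2.+1) n.*2 %/ p ^ k in e.
have ea : a = \sum_(1 <= k < n.*2.+1) n %/ p ^ k.
  have le1: n.+1 <= n.*2.+1 by lia.
  rewrite /a (big_cat_nat _ le1) //=.
  rewrite [X in _ = _ + X]big1_seq ?addn0 // => k /andP[_].
  rewrite mem_index_iota => /andP[hk _]; apply/divn_small.
  apply: leq_trans hk _; apply: ltnW; exact: ltn_expl.
have hb2 : b <= a.*2 + K.
  have hd : forall (r : seq nat), \sum_(k <- r) (n %/ p ^ k).*2 = (\sum_(k <- r) n %/ p ^ k).*2.
    by elim=>[|x r IH]; rewrite ?big_nil ?big_cons ?IH ?doubleD.
  rewrite ea /b.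
  apply: leq_trans (_ : \sum_(1 <= k < n.*2.+1) ((n %/ p ^ k).*2 + (k <= K)) <= _).
    apply: leq_sum => k _.
    case: (leqP k K) => hk; first by rewrite div2_le // expn_gt0 ltnW.
    rewrite addn0 divn_small ?leq0n //.
    apply: leq_trans hK2 _; by rewrite leq_exp2l.
  rewrite big_split /= hd leq_add2l; exact: count_le.
lia.
Qed.

End NatPart.

Lemma Rsum_le (I : Type) (r : seq I) (P : pred I) (F G : I -> R) :
  (forall i, P i -> F i <= G i) ->
  \big[Rplus/0]_(i <- r | P i) F i <= \big[Rplus/0]_(i <- r | P i) G i.
Proof. move=> h; apply: (big_ind2 Rle) => //; [lra | move=> *; lra]. Qed.

Lemma Rsum_ge0 (I : Type) (r : seq I) (P : pred I) (F : I -> R) :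
  (forall i, P i -> 0 <= F i) -> 0 <= \big[Rplus/0]_(i <- r | P i) F i.
Proof. move=> h; apply: (big_ind (fun x => 0 <= x)) => //; [lra | move=> *; lra]. Qed.

Lemma INR_addn m n : INR (m + n)%N = INR m + INR n.
Proof. exact: plus_INR. Qed.
Lemma INR_muln m n : INR (m * n)%N = INR m * INR n.
Proof. exact: mult_INR. Qed.
Lemma INR_expn m n : INR (m ^ n)%N = INR m ^ n.
Proof. elim: n => [|n IH] //=; by rewrite expnS INR_muln IH. Qed.
Lemma INR_leq m n : (m <= n)%N -> INR m <= INR n.
Proof. move/leP; exact: le_INR. Qed.
Arguments INR_leq {m n}.
Lemma INR_ltn m n : (m < n)%N -> INR m < INR n.
Proof. move/ltP; exact: lt_INR. Qed.
Arguments INR_ltn {m n}.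

Lemma Rsum_nat_widen (g : nat -> R) a b :
  (forall p, 0 <= g p) -> (forall p, (a <= p)%N -> g p = 0) ->
  \big[Rplus/0]_(0 <= p < b) g p <= \big[Rplus/0]_(0 <= p < a) g p.
Proof.
move=> g0 gz; case: (leqP b a) => h.
- rewrite (big_cat_nat (leq0n b) h) /=.
  have: 0 <= \big[Rplus/0]_(b <= p < a) g p by apply: Rsum_ge0.
  lra.
- rewrite (big_cat_nat (leq0n a) (ltnW h)) /=.
  rewrite [X in _ + X]big1_seq; first lra.
  move=> i /andP[_]; rewrite mem_index_iota => /andP[hi _]; exact: gz.
Qed.

Lemma Rsum_count (c : R) T m : 0 <= c ->
  \big[Rplus/0]_(0 <= p < m) (if (p < T)%N then c else 0) <= INR T * c.
Proof.
move=> c0.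
suff: \big[Rplus/0]_(0 <= p < m) (if (p < T)%N then c else 0) <= INR (minn m T) * c.
  move=> h; apply: Rle_trans h _; apply: Rmult_le_compat_r => //.
  apply: INR_leq; exact: geq_minr.
elim: m => [|m IH]; first by rewrite big_geq // min0n /=; lra.
rewrite big_nat_recr //=.
case: (ltnP m T) => h.
- have e1: minn m T = m by apply/minn_idPl; apply: ltnW.
  have e2: minn m.+1 T = m.+1 by apply/minn_idPl.
  rewrite e2 S_INR; rewrite e1 in IH; lra.
- have e1: minn m T = T by apply/minn_idPr.
  have e2: minn m.+1 T = T by apply/minn_idPr; apply: leqW.
  rewrite e2; rewrite e1 in IH; lra.
Qed.

Lemma ln_prod (r : seq nat) (P : pred nat) (F : nat -> nat) :
  (forall i, (0 < F i)%N) ->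
  ln (INR (\prod_(i <- r | P i) F i)) = \big[Rplus/0]_(i <- r | P i) ln (INR (F i)).
Proof.
move=> h; elim: r => [|x r IH]; first by rewrite !big_nil /= ln_1.
rewrite !big_cons; case: (P x) => //.
rewrite INR_muln ln_mult -?IH //; apply: lt_0_INR; apply/ltP => //.
by apply: prodn_cond_gt0.
Qed.
Lemma binlow n : (2 ^ n <= 'C(n.*2, n))%N.
Proof.
elim: n => [|n IH]; first by rewrite bin0.
rewrite doubleS binS.
have e: 'C(n.*2.+1, n.+1) = 'C(n.*2.+1, n).
  rewrite -(bin_sub (_ : n.+1 <= n.*2.+1)%N); last by lia.
  congr binomial; lia.
rewrite e expnS.
have : ('C(n.*2, n) <= 'C(n.*2.+1, n))%N by apply: leq_bin2l.
lia.
Qed.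

Definition Theta (M : nat) : R :=
  \big[Rplus/0]_(0 <= p < M) (if prime p then ln (INR p) else 0).

Lemma ln0 : ln 0 = 0.
Proof. unfold ln. case: Rlt_dec => [h|h]. exfalso; lra. done. Qed.

Lemma ln_INR_ge0 p : 0 <= ln (INR p).
Proof.
case: p => [|p]; first by rewrite (_ : INR 0 = 0) // ln0; lra.
rewrite -ln_1; apply: ln_le; first lra. rewrite S_INR; have := pos_INR p; lra.
Qed.

Lemma cheb n T : (0 < n)%N -> (n.*2 < T * T)%N ->
  INR n * ln 2 <= Theta (n.*2.+1) + INR T * ln (INR n.*2).
Proof.
move=> n0 hT.
set C := 'C(n.*2, n).
have C0 : (0 < C)%N by rewrite bin_gt0; lia.
have n2pos : 0 < INR n.*2 by apply: lt_0_INR; apply/ltP; lia.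
have L2n : 0 <= ln (INR n.*2).
  rewrite -ln_1; apply: ln_le; first lra. have: (1 <= n.*2)%N by lia. by move/INR_leq.
have low : INR n * ln 2 <= ln (INR C).
  rewrite -ln_pow; last lra.
  apply: ln_le; first by apply: pow_lt; lra.
  have e2 : INR 2 = 2 by simpl; lra.
  have := INR_leq (binlow n); rewrite INR_expn -/C e2 //.
apply: Rle_trans low _.
set g := fun p => if prime p then (if (p <= n.*2)%N then ln (INR p) + (if (p < T)%N then ln (INR n.*2) else 0) else 0) else 0.
have g0 : forall p, 0 <= g p.
  move=> p; rewrite /g; case: (prime p) => //; last lra.
  case: (p <= n.*2)%N; last lra.
  have := ln_INR_ge0 p; case: (p < T)%N; lra.
have e1 : ln (INR C) = \big[Rplus/0]_(0 <= p < C.+1) ln (INR (p ^ logn p C)).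
  rewrite -{1}(partnT C0) /partn ln_prod; last by move=> i; apply: pfactor_gt0.
  done.
rewrite e1.
apply: Rle_trans (_ : \big[Rplus/0]_(0 <= p < C.+1) g p <= _).
  apply: Rsum_le => p _.
  rewrite /g; case pp: (prime p); last first.
    by rewrite /logn pp expn0 /= ln_1; lra.
  have hv := @leg_bound p n pp n0.
  rewrite -/C in hv.
  set v := logn p C in hv *.
  have p1 := prime_gt1 pp.
  case: v hv => [|[|v]] hv.
  - rewrite expn0 /= ln_1. case: (p <= n.*2)%N; last lra.
    have := ln_INR_ge0 p; case: (p < T)%N; lra.
  - rewrite expn1 in hv; rewrite hv expn1. case: (p < T)%N; lra.
  - have hp2 : (p * p <= n.*2)%N.
      apply: leq_trans hv. rewrite mulnn leq_exp2l //.
    have hp : (p <= n.*2)%N by apply: leq_trans hp2; apply: leq_pmull; lia.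
    have hpT : (p < T)%N.
      case: (ltnP p T) => // hTp. have: (T * T <= p * p)%N by apply: leq_mul. lia.
    rewrite hp hpT.
    have : ln (INR (p ^ v.+2)) <= ln (INR n.*2).
      apply: ln_le; last exact: INR_leq.
      apply: lt_0_INR; apply/ltP; by rewrite expn_gt0 (ltnW p1).
    have := ln_INR_ge0 p; lra.
apply: Rle_trans (_ : \big[Rplus/0]_(0 <= p < n.*2.+1) g p <= _).
  apply: Rsum_nat_widen => // p hp; rewrite /g.
  case: (prime p) => //. by rewrite leqNgt hp.
apply: Rle_trans (_ : \big[Rplus/0]_(0 <= p < n.*2.+1)
   ((if prime p then ln (INR p) else 0) + (if (p < T)%N then ln (INR n.*2) else 0)) <= _).
  apply: Rsum_le => p _; rewrite /g.
  case: (prime p); case: (p <= n.*2)%N; case: (p < T)%N; have := ln_INR_ge0 p; lra.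
rewrite big_split /=.
have := Rsum_count _ T (n.*2.+1) L2n. rewrite /Theta. lra.
Qed.

Lemma Theta_mono a b : (a <= b)%N -> Theta a <= Theta b.
Proof.
move=> h; rewrite /Theta (big_cat_nat (leq0n a) h) /=.
have : 0 <= \big[Rplus/0]_(a <= p < b) (if prime p then ln (INR p) else 0).
  apply: Rsum_ge0 => p _; case: (prime p); [exact: ln_INR_ge0 | lra].
lra.
Qed.

Lemma ln_le_sub1 y : 0 < y -> ln y <= y - 1.
Proof.
move=> y0; have h : ln (exp (y - 1)) = y - 1 by rewrite ln_exp.
rewrite -[X in _ <= X]h; apply: ln_le => //.
have := exp_ineq1_le (y - 1); lra.
Qed.

Lemma ln2_gt : 1/2 < ln 2.
Proof.
have h1 : exp (1/2) * exp (1/2) = exp 1 by rewrite -exp_plus; f_equal; lra.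
have h2 := exp_le_3.
have h3 : 0 < exp (1/2) by apply: exp_pos.
have h4 : exp (1/2) < 2 by nra.
rewrite -{1}(ln_exp (1/2)); apply: ln_increasing => //.
Qed.

Lemma ln_le_4s x : 1 <= x -> ln x <= 4 * sqrt (sqrt x).
Proof.
move=> x1.
have sx : 0 < sqrt x by apply: sqrt_lt_R0; lra.
have ssx : 0 < sqrt (sqrt x) by apply: sqrt_lt_R0.
have e : x = sqrt (sqrt x) ^ 4.
  rewrite (_ : sqrt (sqrt x) ^ 4 = (sqrt (sqrt x) * sqrt (sqrt x)) * (sqrt (sqrt x) * sqrt (sqrt x))); last by ring.
  rewrite sqrt_sqrt; last lra. rewrite sqrt_sqrt; lra.
rewrite {1}e ln_pow //.
have := ln_le_sub1 _ ssx; rewrite /= ; lra.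
Qed.

Lemma big_x x : 100000000 <= x -> 100 <= sqrt (sqrt x).
Proof.
move=> hx.
have : sqrt (sqrt 100000000) <= sqrt (sqrt x).
  apply: sqrt_le_1_alt; apply: sqrt_le_1_alt; lra.
have e1 : sqrt 100000000 = 10000 by rewrite (_ : 100000000 = 10000 * 10000); [apply: sqrt_square|]; lra.
have e2 : sqrt 10000 = 100 by rewrite (_ : 10000 = 100 * 100); [apply: sqrt_square|]; lra.
by rewrite e1 e2.
Qed.

Lemma cheb_asym M : 100000000 <= INR M -> INR M / 5 <= Theta M.
Proof.
move=> hM.
set x := INR M in hM *.
set s := sqrt (sqrt x).
have s100 : 100 <= s by apply: big_x.
have sx : 0 <= sqrt x by apply: sqrt_pos.
have ess : s * s = sqrt x by rewrite /s sqrt_sqrt.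
have exx : sqrt x * sqrt x = x by rewrite sqrt_sqrt; lra.
have M3 : (3 <= M)%N.
  case: (leqP 3 M) => // h. have : INR M <= INR 2 by apply: INR_leq; lia.
  rewrite /x in hM; simpl INR; lra.
set n := (M.-1 %/ 2)%N.
have hn1 : (n.*2.+1 <= M)%N by rewrite /n; lia.
have hn2 : (M <= n.*2 + 2)%N by rewrite /n; lia.
have n0 : (0 < n)%N by rewrite /n; lia.
set T := (Nat.sqrt n.*2).+1.
have [hs1 hs2] := Nat.sqrt_spec n.*2 (Nat.le_0_l _).
have hT : (n.*2 < T * T)%N by apply/ltP; rewrite /T -multE; exact hs2.
have hc := cheb _ _ n0 hT.
have hmono := Theta_mono _ _ hn1.
have hnx : (x - 2) / 2 <= INR n.
  have := INR_leq hn2; rewrite INR_addn -mul2n INR_muln /x; simpl INR; lra.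
have h2n : INR n.*2 <= x by apply: INR_leq; lia.
have h2n1 : 1 <= INR n.*2 by apply: (INR_leq (m := 1)); lia.
have hTs : INR T <= s * s + 1.
  rewrite /T S_INR ess; apply: Rplus_le_compat_r.
  have e : INR (Nat.sqrt n.*2) = sqrt (INR (Nat.sqrt n.*2) * INR (Nat.sqrt n.*2))
    by rewrite sqrt_square //; apply: pos_INR.
  rewrite e; apply: sqrt_le_1_alt. apply: Rle_trans h2n.
  rewrite -INR_muln; apply: INR_leq; apply/leP; rewrite -multE; exact hs1.
have hln : ln (INR n.*2) <= 4 * s.
  have h1 : ln (INR n.*2) <= ln x by apply: ln_le; lra.
  have h2 := ln_le_4s x ltac:(lra). rewrite -/s in h2. lra.
have lnp : 0 <= ln (INR n.*2) by have := ln_INR_ge0 n.*2.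
have l2 := ln2_gt.
have Tp : 0 <= INR T by apply: pos_INR.
have hx4 : x = (s * s) * (s * s) by rewrite ess.
have : INR T * ln (INR n.*2) <= (s * s + 1) * (4 * s).
  apply: Rmult_le_compat => //.
move=> hB.
have : INR n * ln 2 >= (x - 2) / 2 * (1/2).
  apply: Rle_ge; apply: Rmult_le_compat; lra.
have key : (x - 2) / 2 * (1/2) - (s * s + 1) * (4 * s) >= x / 5.
  rewrite hx4.
  have h1 : 0 <= s * s * s * (s - 100) by apply: Rmult_le_pos; [|lra]; apply: Rmult_le_pos; [|lra]; nra.
  nra.
move=> *; lra.
Qed.

Lemma W_pos N : (0 < W_of N)%N.
Proof. rewrite /W_of; apply: prodn_cond_gt0 => p /prime_gt0 //. Qed.

Lemma W_ge2 N : (2 <= w_of N)%N -> (2 <= W_of N)%N.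
Proof.
move=> hw; rewrite /W_of.
have h02 : (0 <= 2)%N by [].
have h2w : (2 <= (w_of N).+1)%N by lia.
have h3 : (2 < (w_of N).+1)%N by lia.
rewrite (big_cat_nat h02 h2w) /= (big_ltn_cond h3) /=.
have p1 : (0 < \prod_(0 <= i < 2 | prime i) i)%N by apply: prodn_cond_gt0 => p /prime_gt0.
have p2 : (0 < \prod_(3 <= i < (w_of N).+1 | prime i) i)%N by apply: prodn_cond_gt0 => p /prime_gt0.
nia.
Qed.

Lemma W_le N : (W_of N <= (w_of N).+1 ^ (w_of N).+1)%N.
Proof.
rewrite /W_of big_mkcond /=.
rewrite [X in (X <= _)%N]big_seq.
apply: leq_trans (_ : \prod_(p <- index_iota 0 (w_of N).+1 | p \in index_iota 0 (w_of N).+1) (w_of N).+1 <= _)%N.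
  apply: leq_prod => p; rewrite mem_index_iota => /andP[_ h]. case: prime; lia.
by rewrite -big_seq prod_nat_const_nat subn0.
Qed.

Lemma coprime_W N m : prime m -> (w_of N < m)%N -> coprime m (W_of N).
Proof.
move=> pm hm; rewrite /W_of big_seq_cond.
apply: (big_ind (fun k => coprime m k)).
- exact: coprimen1.
- move=> a b ha hb; by rewrite coprimeMr ha hb.
- move=> p /andP[hp pp]; rewrite mem_index_iota in hp.
  rewrite prime_coprime //. apply/negP => /(dvdn_leq (prime_gt0 pp)). lia.
Qed.

Lemma chi1 (chi : R -> R) :
  (forall (k : nat) (x : R), ex_derive_n chi k x) ->
  (forall x : R, chi x <> 0 -> -1 <= x <= 1) -> chi 1 = 0.
Proof.
move=> hd hs.
have hc : continuous chi 1 := ex_derive_continuous chi 1 (hd 1%N 1).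
case: (Req_dec (chi 1) 0) => // hne; exfalso.
have ep : 0 < Rabs (chi 1) by apply: Rabs_pos_lt.
have := proj1 (filterlim_locally chi (chi 1)) hc (mkposreal _ ep).
case=> d hdel.
have hy : ball 1 d (1 + d / 2).
  rewrite /ball /= /AbsRing_ball /abs /minus /plus /opp /=.
  have dp := cond_pos d.
  rewrite Rabs_right; lra.
have := hdel _ hy.
have z : chi (1 + d / 2) = 0.
  case: (Req_dec (chi (1 + d / 2)) 0) => // hz.
  have := hs _ hz; have dp := cond_pos d; lra.
rewrite z /ball /= /AbsRing_ball /abs /minus /plus /opp /=.
rewrite Rplus_0_l Rabs_Ropp; lra.
Qed.

Lemma moebius1 : moebius 1 = 1.
Proof.
have e : primes 1 = [::] by apply/eqP; rewrite primes_eq0.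
by rewrite /moebius /squarefreeb e /=.
Qed.

Lemma chi_big (chi : R -> R) y :
  (forall x : R, chi x <> 0 -> -1 <= x <= 1) -> chi 1 = 0 -> 1 <= y -> chi y = 0.
Proof.
move=> hs h1 hy.
case: (Req_dec y 1) => [->|ne] //.
case: (Req_dec (chi y) 0) => // hz; have := hs _ hz; lra.
Qed.

Lemma lambda_prime (chi : R -> R) alpha N m :
  (forall x : R, chi x <> 0 -> -1 <= x <= 1) -> chi 1 = 0 ->
  prime m -> 1 < R_of alpha N -> R_of alpha N <= INR m ->
  lambda_ chi alpha N m = chi 0.
Proof.
move=> hs h1 pm R1 Rm.
have m0 := prime_gt0 pm.
have pe : perm_eq (divisors m) [:: 1%N; m].
  apply: uniq_perm; first exact: divisors_uniq.
    rewrite /= andbT inE. have := prime_gt1 pm. by case: eqP => // <-.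
  move=> d; rewrite -dvdn_divisors // !inE.
  case/primeP: pm => _ hp.
  apply/idP/idP; first by move/hp.
  by case/orP => /eqP ->; rewrite ?dvd1n ?dvdnn.
rewrite /lambda_ (perm_big _ pe) !big_cons big_nil moebius1.
have lR : 0 < ln (R_of alpha N) by rewrite -ln_1; apply: ln_increasing; lra.
have hy : 1 <= ln (INR m) / ln (R_of alpha N).
  apply: (Rmult_le_reg_r (ln (R_of alpha N))) => //.
  rewrite /Rdiv Rmult_assoc Rinv_l; last lra.
  rewrite Rmult_1_l Rmult_1_r; apply: ln_le; lra.
rewrite (chi_big chi _ hs h1 hy).
rewrite (_ : INR 1 = 1) // ln_1 /Rdiv Rmult_0_l. rewrite /=. ring.
Qed.

Lemma totient_le n : (totient n <= n)%N.
Proof.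
rewrite totient_count_coprime.
apply: leq_trans (_ : \sum_(0 <= d < n) 1 <= n)%N.
  by apply: leq_sum => d _; case: coprime.
by rewrite sum_nat_const_nat subn0 muln1.
Qed.

Lemma phi_bounds N : 0 <= phiW_over_W N <= 1.
Proof.
rewrite /phiW_over_W.
have W0 : 0 < INR (W_of N) by apply: lt_0_INR; apply/ltP; apply: W_pos.
have t0 := pos_INR (totient (W_of N)).
have tW : INR (totient (W_of N)) <= INR (W_of N) by apply: INR_leq; apply: totient_le.
split.
- apply: Rmult_le_pos => //; apply: Rlt_le; apply: Rinv_0_lt_compat => //.
- apply: (Rmult_le_reg_r (INR (W_of N))) => //.
  rewrite /Rdiv Rmult_assoc Rinv_l; lra.
Qed.

Lemma ln_nonpos y : y <= 0 -> ln y = 0.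
Proof. move=> hy; unfold ln. case: Rlt_dec => [h|h] //. exfalso; lra. Qed.

Lemma w_facts N : 2 <= ln (ln (INR N)) ->
  (2 <= w_of N)%N /\ INR (w_of N) <= ln (ln (INR N)).
Proof.
move=> h.
have [b1 b2] := base_Int_part (ln (ln (INR N))).
set z := Int_part _ in b1 b2.
have z1 : (1 < z)%Z by apply: lt_IZR; simpl; lra.
have e : INR (w_of N) = IZR z.
  rewrite /w_of -/z INR_IZR_INZ Z2Nat.id //; lia.
split; last by rewrite e.
apply/leP. rewrite /w_of -/z. lia.
Qed.

Lemma lnW_bound N : 2 <= ln (ln (INR N)) -> ln (INR (W_of N)) <= 4 * ln (INR N).
Proof.
move=> h.
have [hw1 hw2] := w_facts N h.
set L := ln (INR N) in h hw2 *.
set w := w_of N in hw1 hw2 *.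
have L1 : 1 < L.
  case: (Rle_lt_dec L 1) => // hL.
  case: (Rle_lt_dec L 0) => hL0.
  - by rewrite ln_nonpos in h; lra.
  - have : ln L <= ln 1 by apply: ln_le.
    rewrite ln_1; lra.
have sL : 0 < sqrt L by apply: sqrt_lt_R0; lra.
have esL : sqrt L * sqrt L = L by apply: sqrt_sqrt; lra.
have lnL : ln L <= 2 * (sqrt L - 1).
  rewrite -{1}esL ln_mult //. have := ln_le_sub1 _ sL; lra.
have hw3 : INR w + 1 <= 2 * sqrt L by lra.
have w1 : 0 < INR w + 1 by have := pos_INR w; lra.
have hW := INR_leq (W_le N); rewrite -/w INR_expn S_INR in hW.
have W0 : 0 < INR (W_of N) by apply: lt_0_INR; apply/ltP; apply: W_pos.
apply: Rle_trans (ln_le _ _ W0 hW) _.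
rewrite ln_pow // S_INR.
have := ln_le_sub1 _ w1.
have : (INR w + 1) * (INR w + 1) <= 4 * L.
  rewrite -esL; nra.
nra.
Qed.

Lemma sum_reindex (F : nat -> R) W N :
  \big[Rplus/0]_(0 <= m < W * N) F m =
  \big[Rplus/0]_(0 <= n < N) \big[Rplus/0]_(0 <= b < W) F (W * n + b)%N.
Proof.
elim: N => [|N IH]; first by rewrite muln0 !big_geq.
rewrite big_nat_recr //= -IH mulnS addnC.
have h0 : (0 <= W * N)%N by [].
have h1 : (W * N <= W * N + W)%N by apply: leq_addr.
rewrite (big_cat_nat h0 h1) /=; congr Rplus.
rewrite -{1}(add0n (W * N)%N) big_addn addKn.
by apply: eq_bigr => i _; rewrite addnC.
Qed.

Lemma Rsum_lin (I : Type) (r : seq I) (P : pred I) (c : R) (F G : I -> R) :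
  \big[Rplus/0]_(i <- r | P i) (c * F i - c * G i) =
  c * (\big[Rplus/0]_(i <- r | P i) F i - \big[Rplus/0]_(i <- r | P i) G i).
Proof.
elim: r => [|x r IH]; first by rewrite !big_nil; ring.
rewrite !big_cons; case: (P x) => //; rewrite IH /=; ring.
Qed.

Lemma Rsum_const_cond (P : pred nat) (c : R) n :
  \big[Rplus/0]_(0 <= i < n | P i) c = INR (\sum_(0 <= i < n) P i)%N * c.
Proof.
rewrite big_mkcond /=.
elim: n => [|n IH]; first by rewrite !big_geq //= ; ring.
rewrite !big_nat_recr //= IH INR_addn; case: (P n) => /=; ring.
Qed.

Lemma Rsum_le_in (r : seq nat) (P : pred nat) (F G : nat -> R) :
  (forall i, i \in r -> P i -> F i <= G i) ->
  \big[Rplus/0]_(i <- r | P i) F i <= \big[Rplus/0]_(i <- r | P i) G i.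
Proof.
move=> h; rewrite !(big_seq_cond P); apply: Rsum_le => i /andP[hi Pi]; exact: h.
Qed.

Lemma Rsum_strict (P : pred nat) (F G : nat -> R) n i0 :
  (forall i, (i < n)%N -> P i -> F i <= G i) -> (i0 < n)%N -> P i0 -> F i0 < G i0 ->
  \big[Rplus/0]_(0 <= i < n | P i) F i < \big[Rplus/0]_(0 <= i < n | P i) G i.
Proof.
move=> hle hi0 P0 hlt.
have h0 : (0 <= i0)%N by [].
have h1 : (i0 <= n)%N by apply: ltnW.
rewrite !(big_cat_nat h0 h1) /= !(big_ltn_cond hi0) P0 /=.
have : \big[Rplus/0]_(0 <= i < i0 | P i) F i <= \big[Rplus/0]_(0 <= i < i0 | P i) G i.
  apply: Rsum_le_in => i; rewrite mem_index_iota => /andP[_ hi]; apply: hle; lia.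
have : \big[Rplus/0]_(i0.+1 <= i < n | P i) F i <= \big[Rplus/0]_(i0.+1 <= i < n | P i) G i.
  apply: Rsum_le_in => i; rewrite mem_index_iota => /andP[_ hi]; apply: hle; lia.
lra.
Qed.

Lemma pigeon (P : pred nat) (a : nat -> R) (c : R) n :
  \big[Rplus/0]_(0 <= i < n | P i) c <= \big[Rplus/0]_(0 <= i < n | P i) a i ->
  (exists i, (i < n)%N /\ P i) ->
  exists i, (i < n)%N /\ P i /\ c <= a i.
Proof.
move=> hs [i0 [hi0 P0]].
case: (Classical_Prop.classic (exists i, (i < n)%N /\ P i /\ c <= a i)) => // hn.
exfalso.
have hlt : forall i, (i < n)%N -> P i -> a i < c.
  move=> i hi Pi; case: (Rlt_le_dec (a i) c) => // h; exfalso; apply: hn; by exists i.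
have := Rsum_strict P a (fun _ => c) n i0 (fun i hi Pi => Rlt_le _ _ (hlt i hi Pi)) hi0 P0 (hlt i0 hi0 P0).
lra.
Qed.

Theorem mainTheorem13 :
  forall (chi : R -> R),
    (forall (k : nat) (x : R), ex_derive_n chi k x) ->
    (forall x : R, 0 <= chi x)%R ->
    (forall x : R, chi x <> 0%R -> (-1 <= x <= 1)%R) ->
    (0 < chi 0)%R ->
    is_RInt_gen (fun x => (Derive chi x) ^ 2)%R (at_point 0%R) (Rbar_locally p_infty) 1%R ->
  forall alpha : R, (0 < alpha < 1 / 2)%R ->
  exists (delta c C : R) (N0 : nat),
    (0 < delta)%R /\ (0 < c)%R /\ (0 < C)%R /\
    forall N : nat, prime N -> (N0 <= N)%N ->
      (exists b : nat, (1 <= b)%N /\ (b < W_of N)%N /\ coprime b (W_of N) /\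
         (1 / INR N * \big[Rplus/0%R]_(0 <= n < N) f_b alpha N b n >= delta)%R) /\
      (forall b : nat, (1 <= b)%N -> (b < W_of N)%N -> coprime b (W_of N) ->
         forall n : nat, (n < N)%N ->
           (0 <= f_b alpha N b n <= c * nu_b chi alpha N b n)%R /\
           (f_b alpha N b n <= C * ln (INR N))%R).
Proof.
move=> chi hd h0 hs hc0 _ alpha ha.
have ch1 := chi1 chi hd hs.
have c0sq : 0 < chi 0 ^ 2 by apply: pow_lt.
exists (1/10), (5 / (alpha * chi 0 ^ 2)), 5, (10 ^ 8)%N.
split; first lra.
split; first by apply: Rdiv_lt_0_compat; [lra | apply: Rmult_lt_0_compat; lra].
split; first lra.
move=> N pN hN.
set x := INR N.
have hx : 100000000 <= x.
  have := INR_leq hN; rewrite INR_expn (_ : INR 10 = 10); last by simpl; lra.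
  rewrite -/x; lra.
have x1 : 1 < x by lra.
have ln3 : 1 <= ln 3.
  rewrite -{1}(ln_exp 1); apply: ln_le; [apply: exp_pos | exact: exp_le_3].
have lnx9 : 9 <= ln x.
  have : ln (3 ^ 9) <= ln x by apply: ln_le; [apply: pow_lt; lra | simpl; lra].
  rewrite ln_pow; last lra. simpl INR; lra.
have hll : 2 <= ln (ln x).
  have : ln (3 ^ 2) <= ln (ln x) by apply: ln_le; [apply: pow_lt; lra | simpl; lra].
  rewrite ln_pow; last lra. simpl INR; lra.
have [hw2 hwl] := w_facts N hll.
have W2 := W_ge2 N hw2.
have lnWb := lnW_bound N hll.
rewrite -/x in hwl lnWb.
set W := W_of N in W2 lnWb *.
set w := w_of N in hw2 hwl *.
have W0 : 0 < INR W by apply: lt_0_INR; apply/ltP; lia.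
have W1 : 1 <= INR W by apply: (INR_leq (m := 1)); lia.
set R := R_of alpha N.
have eR : ln R = alpha * ln x by rewrite /R /R_of /Rpower ln_exp -/x.
have lnx0 : 0 < ln x by lra.
have R1 : 1 < R.
  rewrite /R /R_of /Rpower -exp_0 -/x; apply: exp_increasing; apply: Rmult_lt_0_compat; lra.
have Rs : R <= sqrt x.
  rewrite /R /R_of -/x -Rpower_sqrt; last lra.
  apply: Rle_Rpower; lra.
set phi := phiW_over_W N.
have [phi0 phi1] := phi_bounds N.
rewrite -/phi in phi0 phi1.
set h := fun m => if Rle_dec R (INR m) then (if prime m then phi * ln (INR m) else 0) else 0.
have hf : forall b n, f_b alpha N b n = h (W * n + b)%N by [].
have h0m : forall m, 0 <= h m.
  move=> m; rewrite /h; case: Rle_dec => hh /=; last lra.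
  case: prime; last lra. apply: Rmult_le_pos => //; exact: ln_INR_ge0.
split; last first.
  move=> b b1 bW cb n hn.
  rewrite hf /nu_b -/W -/R -/phi.
  set m := (W * n + b)%N.
  have mW : (m <= W * N)%N by rewrite /m; nia.
  have m1 : (1 <= m)%N by rewrite /m; lia.
  have hlm : ln (INR m) <= 5 * ln x.
    have : ln (INR m) <= ln (INR (W * N)).
      apply: ln_le; [apply: lt_0_INR; apply/ltP; lia | exact: INR_leq].
    rewrite INR_muln -/x ln_mult; [move=> ?; lra | lra | lra].
  have nu0 : 0 <= phi * ln R * lambda_ chi alpha N m ^ 2.
    apply: Rmult_le_pos; [apply: Rmult_le_pos => //; rewrite eR; nra | apply: pow2_ge_0].
  rewrite /h; case: Rle_dec => hRm /=; last first.
    split; [split; [lra|] |]; [apply: Rmult_le_pos => //; apply: Rlt_le; apply: Rdiv_lt_0_compat; nra | nra].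
  case pm: (prime m); last first.
    split; [split; [lra|] |]; [apply: Rmult_le_pos => //; apply: Rlt_le; apply: Rdiv_lt_0_compat; nra | nra].
  rewrite (lambda_prime chi alpha N m hs ch1 pm R1 hRm) eR.
  have lm0 := ln_INR_ge0 m.
  have e : 5 / (alpha * chi 0 ^ 2) * (phi * (alpha * ln x) * chi 0 ^ 2) = 5 * (phi * ln x).
    field; lra.
  rewrite e.
  split; first split.
  - by apply: Rmult_le_pos.
  - nra.
  - nra.
set s := sqrt (sqrt x).
have s100 : 100 <= s by apply: big_x.
have sx : 0 <= sqrt x by apply: sqrt_pos.
have ess : s * s = sqrt x by rewrite /s sqrt_sqrt.
have exx : sqrt x * sqrt x = x by rewrite sqrt_sqrt; lra.
have lnxs : ln x <= 4 * s by apply: ln_le_4s; lra.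
have upR := archimed R.
have upR0 : (0 < up R)%Z by apply: lt_IZR; lra.
set Kr := Z.to_nat (up R).
have eKr : INR Kr = IZR (up R) by rewrite /Kr INR_IZR_INZ Z2Nat.id //; lia.
set K := maxn Kr w.+1.
have KR : R <= INR K.
  apply: Rle_trans (_ : INR Kr <= _); first lra. apply: INR_leq; exact: leq_maxl.
have Kw : (w < K)%N by apply: leq_trans (leq_maxr Kr w.+1).
have Kup : INR K <= s * s + 1.
  rewrite /K /maxn; case: (ltnP Kr w.+1) => hK.
  - rewrite S_INR.
    have := ln_le_sub1 _ lnx0. have : 4 * s <= s * s by nra. lra.
  - lra.
have K3 : 3 <= INR K.
  have h3 : (3 <= K)%N by lia.
  have e3 : INR 3 = 3 by simpl; lra.
  by have := INR_leq h3; rewrite e3.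
set E := \big[Rplus/0]_(0 <= m < W * N) (if prime m then (if (m < K)%N then ln (INR m) else 0) else 0).
have Eb : E <= x / 10.
  apply: Rle_trans (_ : \big[Rplus/0]_(0 <= m < W * N) (if (m < K)%N then ln (INR K) else 0) <= _).
    apply: Rsum_le => m _.
    case: (prime m); case: (ltnP m K) => hmK; try lra; try exact: ln_INR_ge0.
    case: m hmK => [|m] hmK; first by rewrite (_ : INR 0 = 0) // ln0; exact: ln_INR_ge0.
    apply: ln_le; [apply: lt_0_INR; apply/ltP; lia | apply: INR_leq; lia].
  apply: Rle_trans (Rsum_count _ K (W * N) (ln_INR_ge0 K)) _.
  have lK : ln (INR K) <= 4 * s.
    have : ln (INR K) <= ln x by apply: ln_le; nra.
    lra.
  have lK0 := ln_INR_ge0 K.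
  have hx4 : x = (s * s) * (s * s) by rewrite ess.
  apply: Rle_trans (_ : (s * s + 1) * (4 * s) <= _).
    apply: Rmult_le_compat => //; lra.
  rewrite hx4.
  have h1 : 0 <= s * s * s * (s - 100) by apply: Rmult_le_pos; [|lra]; apply: Rmult_le_pos; [|lra]; nra.
  nra.
have WN : INR (W * N) = INR W * x by rewrite INR_muln.
have Th : INR W * x / 5 <= Theta (W * N).
  rewrite -WN; apply: cheb_asym; rewrite WN; nra.
have key : phi * (Theta (W * N) - E) <=
    \big[Rplus/0]_(0 <= b < W | coprime b W) \big[Rplus/0]_(0 <= n < N) f_b alpha N b n.
  have e1 : \big[Rplus/0]_(0 <= b < W | coprime b W) \big[Rplus/0]_(0 <= n < N) f_b alpha N b n
      = \big[Rplus/0]_(0 <= m < W * N) (if coprime m W then h m else 0).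
    rewrite sum_reindex big_mkcond /=.
    rewrite exchange_big_nat /=.
    apply: eq_bigr => b _.
    have ec : forall n, coprime (W * n + b) W = coprime b W.
      by move=> n; rewrite -coprime_modl mulnC modnMDl coprime_modl.
    under [RHS]eq_bigr => n _ do rewrite ec.
    case: (coprime b W) => //.
    by rewrite big1.
  rewrite e1 /Theta /E -Rsum_lin.
  apply: Rsum_le => m _.
  case pm: (prime m); last first.
    rewrite /h; case: (coprime m W); case: (Rle_dec R (INR m)) => hh /=; rewrite ?pm; lra.
  case: (ltnP m K) => hmK.
    have := h0m m; case: (coprime m W); lra.
  have cm : coprime m W by apply: coprime_W => //; apply: leq_trans Kw hmK.
  have hRm : R <= INR m by apply: Rle_trans KR (INR_leq hmK).
  rewrite cm /h; case: (Rle_dec R (INR m)) => hh /=; last by exfalso.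
  rewrite pm; lra.
have eT : \sum_(0 <= i < W) coprime i W = totient W.
  rewrite totient_count_coprime; apply: eq_bigr => i _; by rewrite coprime_sym.
set Q := Theta (W * N) - E.
have hP : \big[Rplus/0]_(0 <= b < W | coprime b W) (Q / INR W) <=
    \big[Rplus/0]_(0 <= b < W | coprime b W) \big[Rplus/0]_(0 <= n < N) f_b alpha N b n.
  rewrite Rsum_const_cond eT.
  apply: Rle_trans key; right.
  rewrite /phi /phiW_over_W -/W /Q. field; lra.
have ex1 : exists i, (i < W)%N /\ coprime i W by exists 1%N; split; [lia | exact: coprime1n].
have [b [bW [cb hb]]] := pigeon _ _ _ _ hP ex1.
exists b; split.
  case: b bW cb hb => [|b] // bW cb hb.
  exfalso; move: cb; rewrite /coprime gcd0n; move/eqP; lia.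
split => //; split => //.
have hQ : x / 10 <= Q / INR W.
  apply: (Rmult_le_reg_r (INR W)) => //.
  have eq : Q / INR W * INR W = Q by field; lra.
  rewrite eq /Q; nra.
have : x / 10 <= \big[Rplus/0]_(0 <= n < N) f_b alpha N b n by lra.
move=> hS.
apply: Rle_ge.
apply: (Rmult_le_reg_l x); first lra.
rewrite -Rmult_assoc (_ : x * (1 / x) = 1); last by field; lra.
lra.
Qed.
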